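(* Fix $g\ge0$ and $n\ge0$. There is a bijection from the set of ordered rooted trees $T$ with $n+1$ vertices satisfying $\max_{0\le i<n}\operatorname{dist}_T(i,i+1)\le g+1$ to the set of quadruples $(m,L,R,M)$ such that - $m$ is a non-negative integer, - $L=(L_1,\dots,L_m)$ is an $m$-tuple of ordered rooted trees of depth at most $\lfloor g/2\rfloor$, - $R=(R_1,\dots,R_m)$ is an $m$-tuple of ordered rooted trees of depth at most $\lceil g/2\rceil$, - $M$ is an ordered rooted tree of depth at most $\lceil g/2\rceil$ if $m=0$, and of depth exactly $\lceil g/2\rceil$ otherwise, and the total number of vertices of the trees in $L$, $R$ and $M$ is $n+1+m$.
   Context: An ordered rooted tree is an unlabeled rooted tree (with at least one vertex) together with a linear order on the children of each vertex. A rooted tree with vertex set $\{0,\dots,n\}$ is naturally labeled if labels increase towards the root and, for each $i$, all children of $i$ have labels smaller than all children of $i+1$. Each ordered rooted tree with $n+1$ vertices has a unique naturally labeled labeling by $\{0,\dots,n\}$ for which the children of each vertex are ordered by increasing label; vertices of $T$ are identified with these labels, and $\operatorname{dist}_T(i,j)$ is the number of edges on the path between $i$ and $j$. The depth of a rooted tree is the maximal number of edges on a path from the root to a vertex. *)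

(* Defs.v *)
From mathcomp Require Import all_boot.
Set Implicit Arguments. Unset Strict Implicit. Unset Printing Implicit Defensive.

Inductive otree : Type := ONode of seq otree.

Fixpoint osize (t : otree) : nat :=
  let: ONode ts := t in (sumn (map osize ts)).+1.

Fixpoint odepth (t : otree) : nat :=
  let: ONode ts := t in foldr maxn 0 (map (fun s => (odepth s).+1) ts).

(* Vertices are identified with their addresses: the sequence of child
   indices (0-based) on the path from the root.  [olevel t d] lists the
   addresses of the vertices at depth d, in left-to-right (lexicographic)
   order. *)
Fixpoint olevel (t : otree) (d : nat) : seq (seq nat) :=
  match t, d with
  | ONode _, 0 => [:: [::]]
  | ONode ts, d'.+1 =>
      (fix aux (i : nat) (us : seq otree) : seq (seq nat) :=
         match us with
         | [::] => [::]
         | s :: us' => map (cons i) (olevel s d') ++ aux i.+1 us'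
         end) 0 ts
  end.

(* The natural labeling: labels increase towards the root and, for each i,
   children of i have smaller labels than children of i+1, children ordered
   by increasing label.  This is the reverse breadth-first order: deepest
   level first, each level in left-to-right order.  [onat_vertices t] lists
   the vertices (addresses) in order of their labels 0, 1, ..., n. *)
Definition onat_vertices (t : otree) : seq (seq nat) :=
  flatten (rev (mkseq (olevel t) (odepth t).+1)).

Fixpoint lcp (a b : seq nat) : nat :=
  match a, b with
  | x :: a', y :: b' => if x == y then (lcp a' b').+1 else 0
  | _, _ => 0
  end.

Definition addr_dist (a b : seq nat) : nat :=
  size a + size b - (lcp a b).*2.

Definition odist (t : otree) (i j : nat) : nat :=
  addr_dist (nth [::] (onat_vertices t) i) (nth [::] (onat_vertices t) j).

Definition treeSet (g n : nat) : Type :=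
  {t : otree | osize t = n.+1 /\ (forall i, i < n -> odist t i i.+1 <= g.+1)}.

Definition quadSet (g n : nat) : Type :=
  {q : nat * seq otree * seq otree * otree |
     let: (m, L, R, M) := q in
     [/\ size L = m /\ size R = m,
         all (fun T => odepth T <= g./2) L,
         all (fun T => odepth T <= uphalf g) R,
         (if m == 0 then odepth M <= uphalf g else odepth M == uphalf g)
       & sumn (map osize L) + sumn (map osize R) + osize M = n + 1 + m]}.

Example ex1 : onat_vertices (ONode [:: ONode [:: ONode [::]]; ONode [::]])
  = [:: [:: 0; 0]; [:: 0]; [:: 1]; [::]]. Proof. by []. Qed.
Example ex2 : odist (ONode [:: ONode [:: ONode [::]]; ONode [::]]) 0 2 = 3.
Proof. by []. Qed.

(* Main.v *)
Require Import Defs.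
From mathcomp Require Import all_boot zify.
Set Implicit Arguments. Unset Strict Implicit. Unset Printing Implicit Defensive.
From Stdlib Require List.
From Stdlib Require Import IndefiniteDescription ProofIrrelevance.


Definition ochildren (t : otree) : seq otree := let: ONode ts := t in ts.
Lemma ochildrenK t : ONode (ochildren t) = t. Proof. by case: t. Qed.

Definition otree_ind' (P : otree -> Prop)
  (H : forall ts, (forall t, List.In t ts -> P t) -> P (ONode ts)) : forall t, P t :=
  fix F t := match t with ONode ts => H ts
    ((fix G (us : seq otree) : forall u, List.In u us -> P u :=
       match us with
       | [::] => fun u (h : List.In u [::]) => False_ind _ h
       | v :: vs => fun u h => match h with
                   | or_introl e => eq_ind v P (F v) u e
                   | or_intror h' => G vs u h' end end) ts) end.

Fixpoint levs (i : nat) (ts : seq otree) (d : nat) : seq (seq nat) :=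
  match ts with
  | [::] => [::]
  | s :: us => map (cons i) (olevel s d) ++ levs i.+1 us d
  end.

Lemma olevelS ts d : olevel (ONode ts) d.+1 = levs 0 ts d.
Proof. rewrite /=. move: 0. elim: ts => //= t ts IH i. by rewrite IH. Qed.

Lemma olevel0 t : olevel t 0 = [:: [::]]. Proof. by case: t. Qed.

Lemma levs_cat i xs ys d : levs i (xs ++ ys) d = levs i xs d ++ levs (i + size xs) ys d.
Proof.
elim: xs i => [|x xs IH] i /=; first by rewrite addn0.
by rewrite IH catA addSnnS.
Qed.

Lemma dep_le ts k : odepth (ONode ts) <= k <-> (forall t, List.In t ts -> odepth t < k).
Proof.
rewrite /=; elim: ts => [|t ts IH] /=; first by split.
rewrite geq_max; split.
- case/andP=> h1 h2 u [<-|hu] //. by apply IH.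
- move=> h. apply/andP; split; first exact: h (or_introl erefl).
  apply/IH => u hu; exact: h _ (or_intror hu).
Qed.

Lemma dep_gt ts k : k < odepth (ONode ts) -> exists t, List.In t ts /\ k <= odepth t.
Proof.
rewrite /=; elim: ts => [|t ts IH] //=.
rewrite leq_max; case/orP=> h.
- by exists t; split; [left|].
- by case: (IH h) => u [hu hk]; exists u; split; [right|].
Qed.

Lemma child_dep ts t : List.In t ts -> odepth t < odepth (ONode ts).
Proof. move=> h. by apply: (proj1 (dep_le ts (odepth (ONode ts)))). Qed.

Lemma size_olevel t d a : a \in olevel t d -> size a = d.
Proof.
elim/otree_ind': t d a => ts IH [|d] a.
  by rewrite olevel0 inE => /eqP->.
rewrite olevelS. move: 0.
elim: ts IH => [|t ts IHl] IH i //=.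
rewrite mem_cat => /orP[/mapP[b hb ->]|h] /=.
  by rewrite (IH t (or_introl erefl) d b hb).
apply: IHl h => u hu; exact: IH (or_intror hu).
Qed.

Lemma mem_levs i ts d a : a \in levs i ts d ->
  exists j b, [/\ a = j :: b, i <= j < i + size ts & size b = d].
Proof.
elim: ts i => [|t ts IH] i //=.
rewrite mem_cat => /orP[/mapP[b hb ->]|h].
  exists i, b; split => //; first by rewrite leqnn /= addnS ltnS leq_addr.
  exact: size_olevel hb.
case: (IH _ h) => j [b [-> /andP[h1 h2] h3]].
exists j, b; split => //; apply/andP; split; [exact: ltnW | by rewrite -addSnnS].
Qed.

Lemma olevel_nil t d : odepth t < d -> olevel t d = [::].
Proof.
elim/otree_ind': t d => ts IH [|d] //. 
rewrite ltnS olevelS => /dep_le h. move: 0.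
elim: ts IH h => [|t ts IHl] IH h i //=.
rewrite (IH t (or_introl erefl)) ?h //=; last by left.
apply: IHl => u hu; [exact: IH (or_intror hu) | exact: h (or_intror hu)].
Qed.

Lemma levs_nil i ts d : (forall t, List.In t ts -> odepth t < d) -> levs i ts d = [::].
Proof.
elim: ts i => [|t ts IH] i h //=.
rewrite olevel_nil ?h //=; last by left.
apply: IH => u hu; exact: h _ (or_intror hu).
Qed.

Lemma olevel_ne t d : d <= odepth t -> olevel t d != [::].
Proof.
elim/otree_ind': t d => ts IH [|d] //.
rewrite olevelS => /dep_gt [t [ht hd]]. move: 0.
elim: ts IH ht => [|u ts IHl] IH ht i //=.
case: ht => [eut|ht].
  subst u; by case: (olevel t d) (IH t (or_introl erefl) d hd).
have := IHl (fun v hv => IH v (or_intror hv)) ht i.+1.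
by case: (levs _ _ _); rewrite ?cats0 // => *; rewrite -size_eq0 size_cat /= addnS.
Qed.

Lemma levs_ne i ts d t : List.In t ts -> d <= odepth t -> levs i ts d != [::].
Proof.
elim: ts i => [|u ts IH] i //= [eut|ht] hd.
  subst u; by case: (olevel t d) (olevel_ne hd).
have := IH i.+1 ht hd.
by case: (levs _ _ _); rewrite ?cats0 // => *; rewrite -size_eq0 size_cat /= addnS.
Qed.

Lemma sumn_mkseq F N : sumn (mkseq F N) = \sum_(i < N) F i.
Proof.
elim: N => [|N IH]; first by rewrite big_ord0.
by rewrite mkseqS -cats1 sumn_cat IH big_ord_recr /= addn0.
Qed.

Lemma size_levs i t ts d :
  size (levs i (t :: ts) d) = size (olevel t d) + size (levs i.+1 ts d).
Proof. by rewrite /= size_cat size_map. Qed.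

Lemma levs_sum i ts N :
  (forall t, List.In t ts -> \sum_(d < N) size (olevel t d) = osize t) ->
  \sum_(d < N) size (levs i ts d) = sumn (map osize ts).
Proof.
elim: ts i => [|t ts IHl] i IH /=.
  by rewrite big1.
rewrite (eq_bigr (fun d : 'I_N => size (olevel t d) + size (levs i.+1 ts d))); last first.
  by move=> d _; rewrite size_cat size_map.
rewrite big_split /= IH; last by left.
congr addn. apply: IHl => u hu; apply: IH; by right.
Qed.

Lemma lsum t N : odepth t < N -> \sum_(d < N) size (olevel t d) = osize t.
Proof.
elim/otree_ind': t N => ts IH [|N] //.
rewrite ltnS => hd. rewrite big_ord_recl olevel0 /= add1n; congr S.
have hd' := proj1 (dep_le ts N) hd.
rewrite (eq_bigr (fun i : 'I_N => size (levs 0 ts i))); last first.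
  by move=> i _; rewrite -olevelS.
apply: levs_sum => u hu. apply: IH => //. exact: hd'.
Qed.

Lemma size_onat t : size (onat_vertices t) = osize t.
Proof.
rewrite /onat_vertices size_flatten /shape map_rev sumn_rev /mkseq -map_comp.
rewrite -(@lsum t (odepth t).+1) //. have := sumn_mkseq (fun d => size (olevel t d)) (odepth t).+1; rewrite /mkseq => <-. by [].
Qed.

Lemma flatten_sorted (T : Type) (R : rel T) x0 (ss : seq (seq T)) :
  all (fun s => ~~ nilp s) ss ->
  sorted R (flatten ss) =
  all (sorted R) ss && sorted (fun s1 s2 => R (last x0 s1) (head x0 s2)) ss.
Proof.
elim: ss => [|s ss IH] // /andP[hs hne].
case: s hs => [|x s] // _.
rewrite /= cat_path.
case: ss hne IH => [|s2 ss] hne IH; first by rewrite /= !andbT.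
case: s2 hne IH => [|y s2] // hne IH.
have -> : path R (last x s) (flatten ((y :: s2) :: ss)) =
  R (last x s) y && sorted R (flatten ((y :: s2) :: ss)) by [].
rewrite IH //=.
case: (path R x s) => //=.
case: (R (last x s) y) => //=; last by rewrite !andbF.
Qed.

Definition Rd (g : nat) (a b : seq nat) := addr_dist a b <= g.+1.
Definition SL g t := forall d, sorted (Rd g) (olevel t d).
Definition XL g t := forall d, d < odepth t ->
  Rd g (last [::] (olevel t d.+1)) (head [::] (olevel t d)).

Lemma all_mkseqP (T : Type) (P : pred T) f n :
  reflect (forall i, i < n -> P (f i)) (all P (mkseq f n)).
Proof.
rewrite /mkseq all_map; apply: (iffP allP) => h.
- move=> i hi; apply: (h i); by rewrite mem_iota.
- move=> x; rewrite mem_iota => /andP[_ hi]; exact: h.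
Qed.

Lemma cond_iff g n t : osize t = n.+1 ->
  (forall i, i < n -> odist t i i.+1 <= g.+1) <-> SL g t /\ XL g t.
Proof.
move=> hs.
have E : (forall i, i < n -> odist t i i.+1 <= g.+1) <-> sorted (Rd g) (onat_vertices t).
  split.
  - move=> h; apply/(sortedP [::]) => i; rewrite size_onat hs ltnS => hi; exact: h.
  - move/(sortedP [::]) => h i hi; apply: h; by rewrite size_onat hs ltnS.
rewrite E /onat_vertices (flatten_sorted _ [::]); last first.
  rewrite all_rev; apply/all_mkseqP => i hi /=; rewrite /nilp size_eq0; apply: olevel_ne; by rewrite -ltnS.
rewrite all_rev rev_sorted.
split.
- case/andP => /all_mkseqP h1 /(sortedP [::]) h2; split.
  + move=> d; case: (leqP d (odepth t)) => hd; first by apply: h1.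
    by rewrite olevel_nil.
  + move=> d hd; have := h2 d; rewrite size_mkseq !nth_mkseq //; last by apply: ltnW.
    by apply.
- case=> h1 h2; apply/andP; split.
  + apply/all_mkseqP => i _; exact: h1.
  + apply/(sortedP [::]) => i; rewrite size_mkseq ltnS => hi.
    rewrite !nth_mkseq //; last by apply: ltnW.
    exact: h2.
Qed.

Lemma addr_dist_cons k a b : addr_dist (k :: a) (k :: b) = addr_dist a b.
Proof. by rewrite /addr_dist /= eqxx doubleS addSn addnS !subSS. Qed.

Lemma addr_dist_diff j k a b : k != j ->
  addr_dist (k :: a) (j :: b) = (size a + size b).+2.
Proof. by move=> h; rewrite /addr_dist /= (negbTE h) double0 subn0 addSn addnS. Qed.

Lemma addr_dist_le a b : addr_dist a b <= size a + size b.
Proof. exact: leq_subr. Qed.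

Lemma fc g : [/\ g./2 + uphalf g = g, g./2 <= uphalf g & uphalf g <= (g./2).+1].
Proof.
rewrite uphalf_half; have := odd_double_half g; rewrite -addnn.
case: (odd g) => /= h; split; lia.
Qed.

Lemma sorted_low g d s : (forall a, a \in s -> size a = d) -> d + d <= g.+1 ->
  sorted (Rd g) s.
Proof.
case: s => // x s; elim: s x => //= y s IH x h hd.
apply/andP; split.
- rewrite /Rd; apply: leq_trans (addr_dist_le _ _) _.
  by rewrite (h x) ?(h y) // !inE eqxx ?orbT.
- apply: IH => // a ha; apply: h; by rewrite inE ha orbT.
Qed.

Lemma SL_low g t d : d <= uphalf g -> sorted (Rd g) (olevel t d).
Proof.
move=> hd; apply: (sorted_low (d := d)); first by move=> a; apply: size_olevel.
have [h1 h2 h3] := fc g. rewrite uphalf_half in hd h2 h3 h1.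
have := odd_double_half g; rewrite -addnn. case: (odd g) hd h1 h2 h3 => /=; lia.
Qed.

Lemma size_last k (s : seq (seq nat)) : (forall a, a \in s -> size a = k) ->
  size (last [::] s) <= k.
Proof. case: s => [|x s] //= h. by rewrite (h (last x s)) // mem_last. Qed.

Lemma size_head k (s : seq (seq nat)) : (forall a, a \in s -> size a = k) ->
  size (head [::] s) <= k.
Proof. case: s => [|x s] //= h. by rewrite (h x) // mem_head. Qed.

Lemma XL_low g t d : d <= g./2 ->
  Rd g (last [::] (olevel t d.+1)) (head [::] (olevel t d)).
Proof.
move=> hd; rewrite /Rd; apply: leq_trans (addr_dist_le _ _) _.
have h1 := size_last (@size_olevel t d.+1).
have h2 := size_head (@size_olevel t d).
have [e1 e2 e3] := fc g. 
have := odd_double_half g; rewrite -addnn uphalf_half in e1 e2 e3 *.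
case: (odd g) e1 e2 e3 => /=; lia.
Qed.

Lemma lev3 ls s rs e : olevel (ONode (ls ++ s :: rs)) e.+1 =
  levs 0 ls e ++ map (cons (size ls)) (olevel s e) ++ levs (size ls).+1 rs e.
Proof. by rewrite olevelS levs_cat add0n. Qed.

Lemma lev3_mid ls s rs e : (forall t, List.In t ls -> odepth t < e) ->
  (forall t, List.In t rs -> odepth t < e) ->
  olevel (ONode (ls ++ s :: rs)) e.+1 = map (cons (size ls)) (olevel s e).
Proof. by move=> h1 h2; rewrite lev3 !levs_nil // cats0. Qed.

Lemma reduce g k X Y Z : X != [::] -> Y != [::] ->
  Rd g (last [::] (map (cons k) X)) (head [::] (map (cons k) Y ++ Z)) =
  Rd g (last [::] X) (head [::] Y).
Proof.
case: X => [|x X] // _; case: Y => [|y Y] // _.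
by rewrite /= last_map /Rd addr_dist_cons.
Qed.

Lemma sorted_map_cons g k X : sorted (Rd g) (map (cons k) X) = sorted (Rd g) X.
Proof.
case: X => [|x X] //=; rewrite path_map; apply: eq_path => a b.
by rewrite /= /Rd addr_dist_cons.
Qed.

Lemma In_l (t s : otree) ls rs : List.In t ls -> List.In t (ls ++ s :: rs).
Proof. move=> h; apply: List.in_or_app; by left. Qed.
Lemma In_r (t s : otree) ls rs : List.In t rs -> List.In t (ls ++ s :: rs).
Proof. move=> h; apply: List.in_or_app; by right; right. Qed.
Lemma In_m (s : otree) ls rs : List.In s (ls ++ s :: rs).
Proof. apply: List.in_or_app; by right; left. Qed.

Lemma in3 (t s : otree) ls rs : List.In t (ls ++ s :: rs) ->
  [\/ List.In t ls, t = s | List.In t rs].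
Proof. move=> h; case: (List.in_app_or _ _ _ h) => [h1|[h1|h1]]; by [constructor 1|constructor 2|constructor 3]. Qed.

Lemma depth3 c ls s rs : odepth (ONode ls) <= c -> odepth (ONode rs) <= c ->
  c <= odepth s -> odepth (ONode (ls ++ s :: rs)) = (odepth s).+1.
Proof.
move=> /dep_le hl /dep_le hr hs; apply/eqP; rewrite eqn_leq; apply/andP; split.
- apply/dep_le => t /in3 [h|->|h] //.
  + have := hl t h; lia.
  + have := hr t h; lia.
- exact: child_dep (In_m _ _ _).
Qed.

Lemma bwd g ls s rs : odepth (ONode ls) <= g./2 -> odepth (ONode rs) <= uphalf g ->
  uphalf g <= odepth s -> SL g s -> XL g s ->
  SL g (ONode (ls ++ s :: rs)) /\ XL g (ONode (ls ++ s :: rs)).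
Proof.
move=> hl hr hs SLs XLs.
have [e1 e2 e3] := fc g.
have hD := depth3 (leq_trans hl e2) hr hs.
move/dep_le: hl => hl; move/dep_le: hr => hr.
split.
- case=> [|e]; first by rewrite olevel0.
  case: (leqP e.+1 (uphalf g)) => h; first exact: SL_low.
  rewrite lev3_mid ?sorted_map_cons //.
  + move=> t ht; have := hl t ht; lia.
  + move=> t ht; have := hr t ht; lia.
- move=> d hd; case: (leqP d g./2) => h; first exact: XL_low.
  case: d hd h => [|e] // hd h.
  rewrite hD in hd.
  rewrite (@lev3_mid ls s rs e.+1); last 2 first.
    by move=> t ht; have := hl t ht; lia.
    by move=> t ht; have := hr t ht; lia.
  rewrite lev3 (@levs_nil 0 ls e) ?cat0s; last by move=> t ht; have := hl t ht; lia.
  rewrite reduce; first exact: XLs.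
  + by apply: olevel_ne.
  + apply: olevel_ne; lia.
Qed.

Lemma count0_In (p : pred otree) l t : count p l = 0 -> List.In t l -> ~~ p t.
Proof.
elim: l => [|u l IH] //= h [<-|ht].
- by case: (p u) h.
- apply: IH ht; by case: (p u) h.
Qed.

Lemma has_In (p : pred otree) l : has p l -> exists t, List.In t l /\ p t.
Proof.
elim: l => [|u l IH] //= /orP[h|h]; first by exists u; split; [left|].
by case: (IH h) => t [h1 h2]; exists t; split; [right|].
Qed.

Lemma count_big g i ts d : sorted (Rd g) (levs i ts d) -> uphalf g <= d ->
  count (fun t => d <= odepth t) ts <= 1.
Proof.
have [e1 e2 e3] := fc g.
elim: ts i => [|t ts IH] i //= hs hd.
have [hs1 hs2] := cat_sorted2 hs.
have IH' := IH _ hs2 hd.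
case: (leqP d (odepth t)) => ht /=; last by rewrite add0n.
suff: count (fun t0 : otree => d <= odepth t0) ts = 0 by move->.
apply/eqP; rewrite -leqn0 leqNgt -has_count; apply/negP => /has_In [u [hu hdu]].
have ne2 := levs_ne i.+1 hu hdu.
have ne1 := olevel_ne ht.
move: hs.
case E1: (olevel t d) ne1 => [|x X] // _.
case E2: (levs i.+1 ts d) ne2 => [|y Y] // _.
have [j [b [ey /andP[hj1 hj2] hb]]] : exists j b, [/\ y = j :: b, i.+1 <= j < i.+1 + size ts & size b = d].
  by apply: mem_levs; rewrite E2 mem_head.
rewrite /= cat_path => /andP[_] /=; rewrite last_map => /andP[hR _].
move: hR; rewrite ey /Rd addr_dist_diff; last by rewrite neq_ltn hj1.
rewrite hb (@size_olevel t d); last by rewrite E1 mem_last.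
rewrite uphalf_half in e1 e2 e3 hd.
have := odd_double_half g; rewrite -addnn; case: (odd g) e1 e2 e3 hd => /=; lia.
Qed.

Lemma split_uniq (P : otree -> Prop) ls1 s1 rs1 ls2 s2 rs2 :
  (forall t, List.In t ls1 -> ~ P t) -> (forall t, List.In t ls2 -> ~ P t) ->
  P s1 -> P s2 -> ls1 ++ s1 :: rs1 = ls2 ++ s2 :: rs2 ->
  [/\ ls1 = ls2, s1 = s2 & rs1 = rs2].
Proof.
elim: ls1 ls2 => [|u ls1 IH] [|v ls2] /= h1 h2 p1 p2 [e1 e2].
- by split.
- by case: (h2 v (or_introl erefl)); rewrite -e1.
- by case: (h1 u (or_introl erefl)); rewrite e1.
- subst v. have [-> -> ->] := IH ls2 (fun t ht => h1 t (or_intror ht))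
     (fun t ht => h2 t (or_intror ht)) p1 p2 e2. by [].
Qed.

Lemma fwd g ts : SL g (ONode ts) -> XL g (ONode ts) -> uphalf g < odepth (ONode ts) ->
  exists ls s rs, [/\ ts = ls ++ s :: rs, odepth (ONode ls) <= g./2,
    odepth (ONode rs) <= uphalf g, uphalf g <= odepth s & SL g s /\ XL g s].
Proof.
move=> SLT XLT hD.
have [e1 e2 e3] := fc g.
case: (dep_gt hD) => s [hs hcs].
case: (List.in_split _ _ hs) => ls [rs Ets]. subst ts.
have := SLT (uphalf g).+1; rewrite olevelS => /count_big /(_ (leqnn _)).
rewrite count_cat /= hcs => hcnt.
have hl : forall t, List.In t ls -> odepth t < uphalf g.
  move=> t ht; rewrite ltnNge; apply: (count0_In (p := fun t => uphalf g <= odepth t)) ht.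
  lia.
have hr : forall t, List.In t rs -> odepth t < uphalf g.
  move=> t ht; rewrite ltnNge; apply: (count0_In (p := fun t => uphalf g <= odepth t)) ht.
  lia.
have hsT : odepth s < odepth (ONode (ls ++ s :: rs)) := child_dep (In_m _ _ _).
exists ls, s, rs; split => //.
- apply/dep_le => t ht. have := hl t ht. case: (ltnP (odepth t) g./2) => // hf hc.
  exfalso.
  have hc' : uphalf g = (g./2).+1 by lia.
  have hlt : (g./2).+1 < odepth (ONode (ls ++ s :: rs)) by rewrite -hc'.
  have X := XLT _ hlt.
  rewrite (@lev3_mid ls s rs (g./2).+1) in X; last 2 first.
    by move=> u hu; rewrite -hc'; apply: hl.
    by move=> u hu; rewrite -hc'; apply: hr.
  rewrite lev3 in X.
  have ne := levs_ne 0 ht hf.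
  case E: (levs 0 ls g./2) ne X => [|y Y] // _.
  have [j [b [ey /andP[hj1 hj2] hb]]] : exists j b, [/\ y = j :: b, 0 <= j < 0 + size ls & size b = g./2].
    by apply: mem_levs; rewrite E mem_head.
  have ne2 : olevel s (g./2).+1 != [::] by apply: olevel_ne; rewrite -hc'.
  case E2: (olevel s (g./2).+1) ne2 => [|x X'] // _.
  rewrite /= last_map ey /Rd addr_dist_diff; last by rewrite neq_ltn hj2 orbT.
  rewrite hb (@size_olevel s (g./2).+1); last by rewrite E2 mem_last.
  rewrite uphalf_half in e1 e2 e3 hc'.
  have := odd_double_half g; rewrite -addnn; case: (odd g) e1 e2 e3 hc' => /=; lia.
- by apply/dep_le.
- split.
  + move=> d; have := SLT d.+1; rewrite lev3 => H.
    have [_ H2] := cat_sorted2 H; have [H3 _] := cat_sorted2 H2.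
    by rewrite sorted_map_cons in H3.
  + move=> e he; case: (leqP e g./2) => h; first exact: XL_low.
    have hT : e.+1 < odepth (ONode (ls ++ s :: rs)) by lia.
    have X := XLT e.+1 hT.
    rewrite (@lev3_mid ls s rs e.+1) in X; last 2 first.
      by move=> u hu; have := hl u hu; lia.
      by move=> u hu; have := hr u hu; lia.
    rewrite lev3 (@levs_nil 0 ls e) ?cat0s in X; last by move=> u hu; have := hl u hu; lia.
    rewrite reduce in X => //; apply: olevel_ne; lia.
Qed.

Fixpoint build (L R : seq otree) (M : otree) : otree :=
  match L, R with
  | l :: L', r :: R' => ONode (ochildren l ++ build L' R' M :: ochildren r)
  | _, _ => M
  end.

Definition quadOK g L R M := [/\ size L = size R, all (fun T => odepth T <= g./2) L,
  all (fun T => odepth T <= uphalf g) R &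
  (if size L == 0 then odepth M <= uphalf g else odepth M == uphalf g)].

Lemma depth_ch t : odepth (ONode (ochildren t)) = odepth t.
Proof. by rewrite ochildrenK. Qed.

Lemma quadOK_tail g l L r R M : quadOK g (l :: L) (r :: R) M ->
  [/\ quadOK g L R M, odepth l <= g./2, odepth r <= uphalf g & odepth M = uphalf g].
Proof.
case=> /= [[hs] /andP[hl aL] /andP[hr aR] hM].
have hM' : odepth M = uphalf g by apply/eqP.
split => //; split => //.
case: (size L == 0) => //; by rewrite hM'.
Qed.

Lemma buildE l L r R M :
  build (l :: L) (r :: R) M = ONode (ochildren l ++ build L R M :: ochildren r).
Proof. by []. Qed.

Lemma build_depth g L R M : quadOK g L R M -> odepth (build L R M) = size L + odepth M.
Proof.
elim: L R => [|l L IH] [|r R] //; first by case.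
move=> /quadOK_tail [q hl hr hM].
have [e1 e2 e3] := fc g.
rewrite buildE (@depth3 (uphalf g)) ?depth_ch ?(IH R) ?addSn //.
- exact: leq_trans hl e2.
- rewrite hM; exact: leq_addl.
Qed.

Lemma low_cond g t : odepth t <= uphalf g -> SL g t /\ XL g t.
Proof.
move=> h; have [e1 e2 e3] := fc g; split.
- move=> d; case: (leqP d (uphalf g)) => hd; first exact: SL_low.
  by rewrite olevel_nil //; lia.
- move=> d hd; apply: XL_low; lia.
Qed.

Lemma build_cond g L R M : quadOK g L R M -> SL g (build L R M) /\ XL g (build L R M).
Proof.
elim: L R => [|l L IH] R hq.
  by case: hq => _ _ _ /= h; apply: low_cond.
case: R hq => [|r R] hq; first by case: hq.
rewrite buildE; have [q hl hr hM] := quadOK_tail hq.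
have [S1 X1] := IH _ q.
apply: bwd => //; rewrite ?depth_ch //.
rewrite (build_depth q) hM; exact: leq_addl.
Qed.

Lemma build_size L R M : size L = size R ->
  osize (build L R M) + size L = sumn (map osize L) + sumn (map osize R) + osize M.
Proof.
elim: L R => [|l L IH] R hs.
  by case: R hs => //= _; rewrite addn0.
case: R hs => [|r R] // [hs].
have := IH _ hs. rewrite buildE.
case: l => ls; case: r => rs /=.
rewrite map_cat sumn_cat /=. lia.
Qed.

Lemma quad_nil g R M : quadOK g [::] R M -> R = [::] /\ odepth M <= uphalf g.
Proof. by case: R => [|r R] [] //. Qed.

Lemma quad_cons g l L R M : quadOK g (l :: L) R M -> exists r R', R = r :: R'.
Proof. by case: R => [|r R] []// _ _ _ _; exists r, R. Qed.

Lemma build_inj g L1 R1 M1 L2 R2 M2 : quadOK g L1 R1 M1 -> quadOK g L2 R2 M2 ->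
  build L1 R1 M1 = build L2 R2 M2 -> [/\ L1 = L2, R1 = R2 & M1 = M2].
Proof.
have [e1 e2 e3] := fc g.
elim: L1 R1 L2 R2 => [|l1 L1 IH] R1 L2 R2 q1 q2 E.
- have [-> h1] := quad_nil q1.
  case: L2 q2 E => [|l2 L2] q2 E.
    by have [-> _] := quad_nil q2.
  have [r2 [R2' ER]] := quad_cons q2; subst R2.
  have := build_depth q2; rewrite -E /=. have [_ _ _ ->] := quadOK_tail q2. lia.
- have [r1 [R1' ER]] := quad_cons q1; subst R1.
  case: L2 q2 E => [|l2 L2] q2 E.
    have [-> h2] := quad_nil q2.
    have := build_depth q1; rewrite E /=. have [_ _ _ ->] := quadOK_tail q1. lia.
  have [r2 [R2' ER]] := quad_cons q2; subst R2.
  move: E; rewrite !buildE => -[E].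
  have [q1' hl1 hr1 hM1] := quadOK_tail q1.
  have [q2' hl2 hr2 hM2] := quadOK_tail q2.
  have hlow : forall l, odepth l <= g./2 -> forall t, List.In t (ochildren l) -> ~ uphalf g <= odepth t.
    move=> l hl t ht; rewrite -depth_ch in hl; have := proj1 (dep_le _ _) hl t ht.
    move=> h1 h2; lia.
  have hbig : forall L R M, quadOK g L R M -> odepth M = uphalf g -> uphalf g <= odepth (build L R M).
    by move=> L R M q hM; rewrite (build_depth q) hM leq_addl.
  have [El Es Er] := split_uniq (P := fun t => uphalf g <= odepth t)
    (hlow _ hl1) (hlow _ hl2) (hbig _ _ _ q1' hM1) (hbig _ _ _ q2' hM2) E.
  have [-> -> ->] := IH _ _ _ q1' q2' Es.
  by rewrite -(ochildrenK l1) -(ochildrenK r1) El Er !ochildrenK.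
Qed.

Lemma build_surj g t : SL g t -> XL g t ->
  exists L R M, quadOK g L R M /\ build L R M = t.
Proof.
have [e1 e2 e3] := fc g.
move: (ltnSn (odepth t)); move: {2}(odepth t).+1 => N.
elim: N t => [|N IH] t // hN SLt XLt.
case: (leqP (odepth t) (uphalf g)) => hc.
  exists [::], [::], t; split => //; by split.
case: t hN SLt XLt hc => ts hN SLt XLt hc.
have [ls [s [rs [Ets hl hr hs [SLs XLs]]]]] := fwd SLt XLt hc.
subst ts.
have hsN : odepth s < N.
  have := child_dep (In_m s ls rs); lia.
have [L [R [M [q hb]]]] := IH s hsN SLs XLs.
exists (ONode ls :: L), (ONode rs :: R), M; split; last by rewrite buildE hb.
case: q => hsz aL aR hM; split => /=.
- by rewrite hsz.
- by rewrite hl.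
- by rewrite hr.
- case: L hsz aL hM hb => [|l L] hsz aL hM hb //=.
  move: hb hM => /= ->; rewrite eqn_leq hs => ->; by [].
Qed.

Definition qprop g n (q : nat * seq otree * seq otree * otree) : Prop :=
     let: (m, L, R, M) := q in
     [/\ size L = m /\ size R = m,
         all (fun T => odepth T <= g./2) L,
         all (fun T => odepth T <= uphalf g) R,
         (if m == 0 then odepth M <= uphalf g else odepth M == uphalf g)
       & sumn (map osize L) + sumn (map osize R) + osize M = n + 1 + m].

Lemma Fok g n q : qprop g n q ->
  osize (build q.1.1.2 q.1.2 q.2) = n.+1 /\
  (forall i, i < n -> odist (build q.1.1.2 q.1.2 q.2) i i.+1 <= g.+1).
Proof.
case: q => [[[m L] R] M] [[hL hR] aL aR hM hsum] /=.
have q : quadOK g L R M by split => //; rewrite ?hL ?hR.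
have hs : osize (build L R M) = n.+1.
  have := build_size M (etrans hL (esym hR)). lia.
split => //.
apply/(cond_iff g hs). exact: build_cond q.
Qed.

Definition Fq g n (q : quadSet g n) : treeSet g n :=
  exist _ (build (sval q).1.1.2 (sval q).1.2 (sval q).2) (@Fok g n (sval q) (svalP q)).

Unset Implicit Arguments.

Theorem lemma3p10 (g n : nat) :
  exists f : treeSet g n -> quadSet g n, bijective f.
Proof.
have surj : forall t : treeSet g n, exists q : quadSet g n, Fq q = t.
  case=> t [hs hc].
  have [SLt XLt] := (cond_iff g hs).1 hc.
  have [L [R [M [hq hb]]]] := build_surj SLt XLt.
  have hp : qprop g n (size L, L, R, M).
    case: hq => hsz aL aR hM; split => //.
    have := build_size M hsz; rewrite hb hs. lia.
  exists (exist _ (size L, L, R, M) hp).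
  rewrite /Fq /=; subst t; congr exist; apply: proof_irrelevance.
have inj : injective (@Fq g n).
  case=> [[[[m1 L1] R1] M1] p1] [[[[m2 L2] R2] M2] p2] /(f_equal sval) /= E.
  have q1 : quadOK g L1 R1 M1.
    by case: p1 => [[h1 h2] a1 b1 c1 _]; split => //; rewrite ?h1 ?h2.
  have q2 : quadOK g L2 R2 M2.
    by case: p2 => [[h1 h2] a1 b1 c1 _]; split => //; rewrite ?h1 ?h2.
  have [EL ER EM] := build_inj q1 q2 E.
  have Em : m1 = m2 by case: p1 => [[<- _] _ _ _ _]; case: p2 => [[<- _] _ _ _ _]; rewrite EL.
  subst. by rewrite (proof_irrelevance _ p1 p2).
pose G t := proj1_sig (constructive_indefinite_description _ (surj t)).
have GK : forall t, Fq (G t) = t.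
  move=> t; exact: proj2_sig (constructive_indefinite_description _ (surj t)).
exists G, (@Fq g n) => [t|q]; first exact: GK.
apply: inj; by rewrite GK.
Qed.
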